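(* Let $d\ge2$, $0<\eta\le\frac{1}{2d}$ and $\gamma=\eta d$, and consider one round $t$ of the Bandit-PCA Online Mirror Descent algorithm with sparse sampling, where $\boldsymbol{W}_t$ is a positive definite density matrix and $\boldsymbol{L}_t$ is symmetric with spectral norm at most $1$. Then $\boldsymbol{W}_t^{-1}+\eta\widetilde{\boldsymbol{L}}_t$ is positive definite and, with $\widetilde{\boldsymbol{W}}_{t+1}=(\boldsymbol{W}_t^{-1}+\eta\widetilde{\boldsymbol{L}}_t)^{-1}$, \[ \mathbb{E}_t\big[\langle\boldsymbol{W}_t-\widetilde{\boldsymbol{W}}_{t+1},\widetilde{\boldsymbol{L}}_t\rangle\big]\le8\eta d\,\|\boldsymbol{L}_t\|_F^2, \] where $\mathbb{E}_t$ is expectation over the round-$t$ sampling randomness given $\boldsymbol{W}_t$ and $\boldsymbol{L}_t$.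
   Context: Notation: $\langle \boldsymbol{A},\boldsymbol{B}\rangle=\mathrm{tr}(\boldsymbol{A}^\top \boldsymbol{B})$; $\|\cdot\|_F$ Frobenius norm; a density matrix is a symmetric positive semidefinite matrix of trace $1$. Sparse sampling at round $t$: write $\boldsymbol{W}_t=\sum_i\mu_i\boldsymbol{u}_i\boldsymbol{u}_i^\top$ (eigendecomposition, orthonormal $\boldsymbol{u}_i$) and $\lambda_i=(1-\gamma)\mu_i+\gamma/d$. Draw $I,J$ independently with $\Pr(I=i)=\Pr(J=i)=\lambda_i$. If $I=J$: $\boldsymbol{w}_t=\boldsymbol{u}_I$ and $\widetilde{\boldsymbol{L}}_t=(\ell_t/\lambda_I^2)\boldsymbol{u}_I\boldsymbol{u}_I^\top$. If $I\ne J$: draw a uniform sign $s\in\{-1,1\}$, $\boldsymbol{w}_t=(\boldsymbol{u}_I+s\boldsymbol{u}_J)/\sqrt2$ and $\widetilde{\boldsymbol{L}}_t=\frac{s\ell_t}{2\lambda_I\lambda_J}(\boldsymbol{u}_I\boldsymbol{u}_J^\top+\boldsymbol{u}_J\boldsymbol{u}_I^\top)$. Here $\ell_t=\boldsymbol{w}_t^\top\boldsymbol{L}_t\boldsymbol{w}_t$. *)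

(* Defs.v *)
(* matrices over a real closed field (algebraic stand-in for R). *)
From HB Require Import structures.
From mathcomp Require Import all_boot all_order all_algebra.
Set Implicit Arguments. Unset Strict Implicit. Unset Printing Implicit Defensive.
Import Order.TTheory GRing.Theory Num.Theory.
Local Open Scope ring_scope.

Section BanditPCA.
Variable R : rcfType.
Variable n : nat.

Definition posdef (A : 'M[R]_n) : Prop :=
  A^T = A /\ forall v : 'cV[R]_n, v != 0 -> 0 < (v^T *m A *m v) 0 0.

Definition density (A : 'M[R]_n) : Prop :=
  A^T = A /\ (forall v : 'cV[R]_n, 0 <= (v^T *m A *m v) 0 0) /\ \tr A = 1.

Definition frob_inner (A B : 'M[R]_n) : R := \tr (A^T *m B).

Definition frob_norm2 (A : 'M[R]_n) : R := \sum_(i < n) \sum_(j < n) A i j ^+ 2.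

Definition spec_norm_le1 (A : 'M[R]_n) : Prop :=
  forall v : 'cV[R]_n, ((A *m v)^T *m (A *m v)) 0 0 <= (v^T *m v) 0 0.

(* Sparse sampling, given eigenvectors (columns of U) and eigenvalues mu of W_t *)
Definition ucol (U : 'M[R]_n) (i : 'I_n) : 'cV[R]_n := col i U.

Definition lam (mu : 'I_n -> R) (eta : R) (i : 'I_n) : R :=
  let gamma := eta * n%:R in (1 - gamma) * mu i + gamma / n%:R.

Definition sgn (b : bool) : R := if b then 1 else -1.

Definition wvec (U : 'M[R]_n) (i j : 'I_n) (b : bool) : 'cV[R]_n :=
  if i == j then ucol U i
  else (Num.sqrt 2)^-1 *: (ucol U i + sgn b *: ucol U j).

Definition ell (U L : 'M[R]_n) (i j : 'I_n) (b : bool) : R :=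
  ((wvec U i j b)^T *m L *m wvec U i j b) 0 0.

Definition Ltil (U : 'M[R]_n) (mu : 'I_n -> R) (eta : R) (L : 'M[R]_n)
    (i j : 'I_n) (b : bool) : 'M[R]_n :=
  if i == j then
    (ell U L i j b / lam mu eta i ^+ 2) *: (ucol U i *m (ucol U i)^T)
  else
    (sgn b * ell U L i j b / (2 * lam mu eta i * lam mu eta j)) *:
      (ucol U i *m (ucol U j)^T + ucol U j *m (ucol U i)^T).

(* E_t: I, J independent with law lam; sign uniform (only used when I <> J) *)
Definition Et (mu : 'I_n -> R) (eta : R) (f : 'I_n -> 'I_n -> bool -> R) : R :=
  \sum_(i < n) \sum_(j < n) lam mu eta i * lam mu eta j *
    (if i == j then f i j true else (f i j true + f i j false) / 2).

End BanditPCA.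

(* Main.v *)
Require Import Defs.
From HB Require Import structures.
From mathcomp Require Import all_boot all_order all_algebra.
From mathcomp Require Import ring lra.
Import Order.TTheory GRing.Theory Num.Theory.
Local Open Scope ring_scope.

Section Scalar.
Context {R : realFieldType}.

Lemma sd1 {eta mu la e : R} : 0 < eta -> 0 < mu -> 0 < la ->
  2 * mu * eta <= la ^+ 2 -> e ^+ 2 <= 1 ->
  -2^-1 <= mu * eta * (e / la ^+ 2) /\ mu * eta * (e / la ^+ 2) <= 2^-1.
Proof.
move=> he hm hl h2 hs.
have hL : 0 < la ^+ 2 by rewrite exprn_gt0.
have e1 : -1 <= e by nra.
have e2 : e <= 1 by nra.
have hme : 0 < mu * eta by rewrite mulr_gt0.
rewrite mulrA; split.
  rewrite ler_pdivlMr //; nra.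
rewrite ler_pdivrMr //; nra.
Qed.

Lemma sd2 (eta mu la e : R) : 0 < eta -> 0 < mu -> 0 < la ->
  mu <= 2 * la -> 2 * mu * eta <= la ^+ 2 -> e ^+ 2 <= 1 ->
  la ^+ 2 * ((e / la ^+ 2) * (mu - (mu^-1 + eta * (e / la ^+ 2))^-1)) <= 8 * eta * e ^+ 2.
Proof.
move=> he hm hl hml h2 hs.
have [t1 t2] := sd1 he hm hl h2 hs.
set t := mu * eta * (e / la ^+ 2) in t1 t2.
have hL : 0 < la ^+ 2 by rewrite exprn_gt0.
have ht : 0 < 1 + t by lra.
have -> : mu^-1 + eta * (e / la ^+ 2) = (1 + t) / mu.
  by rewrite /t; field; rewrite !gt_eqF.
rewrite invf_div.
have hh : 0 < la ^+ 2 + mu * eta * e.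
  move: t1; rewrite /t mulrA ler_pdivlMr // => ?; lra.
have -> : la ^+ 2 * ((e / la ^+ 2) * (mu - mu / (1 + t))) = (mu ^+ 2 * eta * e ^+ 2) / (la ^+ 2 * (1 + t)).
  by rewrite /t; field; rewrite !gt_eqF.
rewrite ler_pdivrMr ?mulr_gt0 //.
have hmu2 : mu ^+ 2 <= 4 * la ^+ 2 by nra.
have he2 : 0 <= eta * e ^+ 2 by rewrite mulr_ge0 ?sqr_ge0 // ltW.
have k1 : 0 <= (eta * e ^+ 2) * (la ^+ 2 * (1 + t) - la ^+ 2 / 2).
  apply: mulr_ge0 => //; nra.
have k2 : 0 <= (eta * e ^+ 2) * (4 * la ^+ 2 - mu ^+ 2).
  apply: mulr_ge0 => //; lra.
have -> : mu ^+ 2 * eta * e ^+ 2 = (eta * e ^+ 2) * mu ^+ 2 by ring.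
have -> : 8 * eta * e ^+ 2 * (la ^+ 2 * (1 + t)) = 8 * (eta * e ^+ 2) * (la ^+ 2 * (1 + t)) by ring.
move: k1 k2 he2; move: (eta * e ^+ 2) (la ^+ 2 * (1 + t)) (la ^+ 2) (mu ^+ 2) => E F G H.
move=> k1 k2 k3; nra.
Qed.


Lemma so1 {eta mu1 mu2 l1 l2 e s : R} : 0 < eta -> 0 < mu1 -> 0 < mu2 -> 0 < l1 -> 0 < l2 ->
  2 * mu1 * eta <= l1 ^+ 2 -> 2 * mu2 * eta <= l2 ^+ 2 -> e ^+ 2 <= 1 -> s ^+ 2 = 1 ->
  (eta * (s * e / (2 * l1 * l2))) ^+ 2 * mu1 * mu2 <= 16^-1.
Proof.
move=> he hm1 hm2 hl1 hl2 h1 h2 hs hs2.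
have hL1 : 0 < l1 ^+ 2 by rewrite exprn_gt0.
have hL2 : 0 < l2 ^+ 2 by rewrite exprn_gt0.
have -> : (eta * (s * e / (2 * l1 * l2))) ^+ 2 * mu1 * mu2
   = s ^+ 2 * (e ^+ 2 / 4) * ((eta * mu1 / l1 ^+ 2) * (eta * mu2 / l2 ^+ 2)).
  by field; rewrite !gt_eqF.
have q1 : 0 <= eta * mu1 / l1 ^+ 2 <= 2^-1.
  apply/andP; split; first by rewrite divr_ge0 // mulr_ge0 // ltW.
  rewrite ler_pdivrMr //; lra.
have q2 : 0 <= eta * mu2 / l2 ^+ 2 <= 2^-1.
  apply/andP; split; first by rewrite divr_ge0 // mulr_ge0 // ltW.
  rewrite ler_pdivrMr //; lra.
rewrite hs2 mul1r.
move: q1 q2 (sqr_ge0 e) hs; move: (eta * mu1 / l1 ^+ 2) (eta * mu2 / l2 ^+ 2) (e ^+ 2) => a b c.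
move=> /andP[a0 a1] /andP[b0 b1] c0 c1.
have hab : 0 <= a * b <= 4^-1 by apply/andP; split; nra.
nra.
Qed.

Lemma so2 {z m1 m2 x y : R} : 0 < m1 -> 0 < m2 -> z ^+ 2 * m1 * m2 <= 16^-1 ->
  - (2^-1 * (x ^+ 2 / m1 + y ^+ 2 / m2)) <= z * (x * y + y * x).
Proof.
move=> hm1 hm2 hz.
have -> : x ^+ 2 / m1 = m1 * (x / m1) ^+ 2 by field; rewrite gt_eqF.
have -> : y ^+ 2 / m2 = m2 * (y / m2) ^+ 2 by field; rewrite gt_eqF.
have -> : z * (x * y + y * x) = 2 * z * m1 * m2 * ((x / m1) * (y / m2)) by field; rewrite !gt_eqF.
move: (x / m1) (y / m2) => a b.
have H : 0 <= m1 * a ^+ 2 + m2 * b ^+ 2 + 4 * z * m1 * m2 * (a * b).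
  rewrite -(pmulr_rge0 _ hm1).
  have -> : m1 * (m1 * a ^+ 2 + m2 * b ^+ 2 + 4 * z * m1 * m2 * (a * b))
     = (m1 * a + 2 * z * m1 * m2 * b) ^+ 2 + (m1 * m2 * b ^+ 2) * (1 - 4 * (z ^+ 2 * m1 * m2)) by ring.
  apply: addr_ge0; first exact: sqr_ge0.
  apply: mulr_ge0; last lra.
  by rewrite mulr_ge0 ?sqr_ge0 // mulr_ge0 // ltW.
lra.
Qed.

Lemma so3 {eta mu1 mu2 l1 l2 e s c : R} : 0 < eta -> 0 < mu1 -> 0 < mu2 -> 0 < l1 -> 0 < l2 ->
  mu1 <= 2 * l1 -> mu2 <= 2 * l2 ->
  2 * mu1 * eta <= l1 ^+ 2 -> 2 * mu2 * eta <= l2 ^+ 2 -> e ^+ 2 <= 1 -> s ^+ 2 = 1 ->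
  c = s * e / (2 * l1 * l2) ->
  l1 * l2 * (c * (2 * (eta * c) * mu1 * mu2 / (1 - (eta * c) ^+ 2 * mu1 * mu2)))
    <= 32 / 15 * eta * e ^+ 2.
Proof.
move=> he hm1 hm2 hl1 hl2 hml1 hml2 h1 h2 hs hs2 hc.
have hk := so1 he hm1 hm2 hl1 hl2 h1 h2 hs hs2; rewrite -hc in hk.
have hK : 15 / 16 <= 1 - (eta * c) ^+ 2 * mu1 * mu2 by lra.
have hKp : 0 < 1 - (eta * c) ^+ 2 * mu1 * mu2 by lra.
move: hK hKp; move: (1 - (eta * c) ^+ 2 * mu1 * mu2) => K hK hKp.
have -> : l1 * l2 * (c * (2 * (eta * c) * mu1 * mu2 / K))
   = (s ^+ 2 * eta * e ^+ 2 * (mu1 * mu2) / (2 * (l1 * l2))) / K.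
  by rewrite hc; field; rewrite !gt_eqF.
rewrite hs2 mul1r ler_pdivrMr //.
have hN : eta * e ^+ 2 * (mu1 * mu2) / (2 * (l1 * l2)) <= 2 * eta * e ^+ 2.
  rewrite ler_pdivrMr ?mulr_gt0 //.
  have hmm : mu1 * mu2 <= 4 * (l1 * l2) by nra.
  have hE : 0 <= eta * e ^+ 2 by rewrite mulr_ge0 ?sqr_ge0 // ltW.
  nra.
have hN0 : 0 <= eta * e ^+ 2 * (mu1 * mu2) / (2 * (l1 * l2)).
  apply: divr_ge0; last by rewrite mulr_ge0 // mulr_ge0 // ltW.
  apply: mulr_ge0; [apply: mulr_ge0; [exact: ltW|exact: sqr_ge0]|apply: mulr_ge0; exact: ltW].
move: hN hN0 hK; move: (eta * e ^+ 2 * (mu1 * mu2) / (2 * (l1 * l2))) => N.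
have hE : 0 <= eta * e ^+ 2 by rewrite mulr_ge0 ?sqr_ge0 // ltW.
move: hE; move: (eta * e ^+ 2) => E; nra.
Qed.

Lemma so4 {z m1 m2 al be ga de : R} : 0 < m1 -> 0 < m2 -> 1 - z ^+ 2 * m1 * m2 != 0 ->
  1 = ga / m1 + z * be -> 0 = al / m1 + z * de -> 0 = be / m2 + z * ga -> 1 = de / m2 + z * al ->
  al + be = - (2 * z * m1 * m2) / (1 - z ^+ 2 * m1 * m2).
Proof.
move=> hm1 hm2 hK e1 e2 e3 e4.
have A : al + z * m1 * de = (al / m1 + z * de) * m1 by field; rewrite gt_eqF.
rewrite -e2 mul0r in A.
have B : de + z * m2 * al = (de / m2 + z * al) * m2 by field; rewrite gt_eqF.
rewrite -e4 mul1r in B.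
have C : be + z * m2 * ga = (be / m2 + z * ga) * m2 by field; rewrite gt_eqF.
rewrite -e3 mul0r in C.
have D : ga + z * m1 * be = (ga / m1 + z * be) * m1 by field; rewrite gt_eqF.
rewrite -e1 mul1r in D.
have ha : al * (1 - z ^+ 2 * m1 * m2) = - (z * m1 * m2).
  have -> : al * (1 - z ^+ 2 * m1 * m2) = (al + z * m1 * de) - z * m1 * (de + z * m2 * al) by ring.
  rewrite A B; ring.
have hb : be * (1 - z ^+ 2 * m1 * m2) = - (z * m1 * m2).
  have -> : be * (1 - z ^+ 2 * m1 * m2) = (be + z * m2 * ga) - z * m2 * (ga + z * m1 * be) by ring.
  rewrite C D; ring.
apply: (mulIf hK); rewrite mulrDl ha hb mulfVK //; ring.
Qed.

End Scalar.

Section Basic.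
Variable R : rcfType.
Variable d : nat.
Implicit Types (A B : 'M[R]_d) (v w y : 'cV[R]_d).

Lemma row_col_mul m p (A : 'M[R]_(m,d)) (B : 'M[R]_(d,p)) i j :
  (row i A *m col j B) 0 0 = (A *m B) i j.
Proof. by rewrite !mxE; apply: eq_bigr => k _; rewrite !mxE. Qed.

Lemma trD m p (A B : 'M[R]_(m,p)) : (A + B)^T = A^T + B^T.
Proof. exact: linearD. Qed.
Lemma trZ m p (a : R) (A : 'M[R]_(m,p)) : (a *: A)^T = a *: A^T.
Proof. exact: linearZ. Qed.

Lemma trN m p (A : 'M[R]_(m,p)) : (- A)^T = - A^T.
Proof. exact: linearN. Qed.

Lemma addE m p (A B : 'M[R]_(m,p)) i j : (A + B) i j = A i j + B i j.
Proof. by rewrite mxE. Qed.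
Lemma oppE m p (A : 'M[R]_(m,p)) i j : (- A) i j = - A i j.
Proof. by rewrite mxE. Qed.
Lemma sclE m p a (A : 'M[R]_(m,p)) i j : (a *: A) i j = a * A i j.
Proof. by rewrite mxE. Qed.
Lemma sumE m p (I : finType) (F : I -> 'M[R]_(m,p)) i j : (\sum_k F k) i j = \sum_k F k i j.
Proof. by rewrite summxE. Qed.

Lemma e00_tr (x : 'M[R]_1) : x^T 0 0 = x 0 0.
Proof. by rewrite mxE. Qed.

Lemma vTw_sym v w : (v^T *m w) 0 0 = (w^T *m v) 0 0.
Proof. by rewrite -e00_tr trmx_mul trmxK. Qed.

Lemma quad_ge0 v : 0 <= (v^T *m v) 0 0.
Proof. rewrite mxE; apply: sumr_ge0 => k _; rewrite mxE -expr2; exact: sqr_ge0. Qed.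

Lemma cs w y : (w^T *m w) 0 0 = 1 -> ((w^T *m y) 0 0) ^+ 2 <= (y^T *m y) 0 0.
Proof.
move=> hw; set t := (w^T *m y) 0 0.
have := quad_ge0 (y - t *: w).
rewrite trD trN trZ !mulmxDl !mulmxDr !mulNmx !mulmxN -!scalemxAl -!scalemxAr.
rewrite !(addE, oppE, sclE) -/t hw (vTw_sym y w) -/t.
move=> h. nra.
Qed.


Variable U : 'M[R]_d.
Hypothesis hU : U^T *m U = 1%:M.
Local Notation u i := (ucol U i).

Lemma uTu i j : (u i)^T *m u j = (i == j)%:R%:M.
Proof.
apply/matrixP => a b; rewrite !ord1 /ucol tr_col row_col_mul hU !mxE.
by case: (i == j); rewrite ?mulr1n ?mulr0n.
Qed.

Lemma uTu00 i j : ((u i)^T *m u j) 0 0 = (i == j)%:R.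
Proof. by rewrite uTu mxE mulr1n. Qed.

Lemma UUT : U *m U^T = 1%:M.
Proof. exact: mulmx1C. Qed.

Lemma sumP : \sum_i u i *m (u i)^T = 1%:M.
Proof.
rewrite -UUT; apply/matrixP => a b; rewrite sumE !mxE; apply: eq_bigr => k _.
by rewrite !mxE big_ord1 !mxE.
Qed.

Lemma mul1x (X : 'cV[R]_d) (Y : 'M[R]_1) : X *m Y = Y 0 0 *: X.
Proof. by rewrite {1}(mx11_scalar Y) mul_mx_scalar. Qed.

Definition xc v i := ((u i)^T *m v) 0 0.

Lemma vdecomp v : v = \sum_k xc v k *: u k.
Proof.
rewrite -{1}(mul1mx v) -sumP mulmx_suml; apply: eq_bigr => k _.
by rewrite -mulmxA mul1x.
Qed.

Lemma vTu v k : (v^T *m u k) 0 0 = xc v k.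
Proof. by rewrite vTw_sym. Qed.

Lemma xc0 v : (forall k, xc v k = 0) -> v = 0.
Proof. move=> h; rewrite (vdecomp v); apply: big1 => k _; by rewrite h scale0r. Qed.


Lemma posdef_unit (A : 'M[R]_d) : posdef A -> A \in unitmx.
Proof.
move=> [_ pd]; rewrite unitmxE unitfE; apply/negP => /det0P [v nz hv].
have : v^T != 0 by apply: contra nz => /eqP h; rewrite -(trmxK v) h linear0.
move/pd; by rewrite trmxK hv mul0mx mxE ltxx.
Qed.

Variables (W : 'M[R]_d) (mu : 'I_d -> R).
Hypothesis hW : W = \sum_(i < d) mu i *: (u i *m (u i)^T).
Hypothesis hWpd : posdef W.

Lemma Wu k : W *m u k = mu k *: u k.
Proof.
rewrite hW mulmx_suml (bigD1 k) //= big1 ?addr0.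
  by rewrite -scalemxAl -mulmxA uTu eqxx mul_mx_scalar scale1r.
move=> i hik; by rewrite -scalemxAl -mulmxA uTu (negbTE hik) mul_mx_scalar scale0r scaler0.
Qed.

Lemma mu_pos k : 0 < mu k.
Proof.
have nz : u k != 0.
  apply/negP => /eqP h; have := uTu00 k k; rewrite h mulmx0 mxE eqxx => /eqP.
  by rewrite eq_sym oner_eq0.
have := hWpd.2 _ nz; by rewrite -mulmxA Wu -scalemxAr sclE uTu00 eqxx mulr1.
Qed.

Lemma Wunit : W \in unitmx. Proof. exact: posdef_unit. Qed.

Lemma Winv_u k : invmx W *m u k = (mu k)^-1 *: u k.
Proof.
have h : u k = mu k *: (invmx W *m u k) by rewrite scalemxAr -Wu mulmxA mulVmx ?Wunit // mul1mx.
by rewrite {2}h scalerA mulVf ?scale1r // gt_eqF // mu_pos.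
Qed.

Lemma Winv_sym : (invmx W)^T = invmx W.
Proof. by rewrite trmx_inv hWpd.1. Qed.

Lemma quadWinv v : (v^T *m invmx W *m v) 0 0 = \sum_k xc v k ^+ 2 / mu k.
Proof.
rewrite {2}(vdecomp v) mulmx_sumr sumE; apply: eq_bigr => k _.
by rewrite -scalemxAr -mulmxA Winv_u -scalemxAr !sclE vTu; field; rewrite gt_eqF // mu_pos.
Qed.

Lemma sum_ge1 (f : 'I_d -> R) k : (forall i, 0 <= f i) -> f k <= \sum_i f i.
Proof. move=> h; rewrite (bigD1 k) //= lerDl; exact: sumr_ge0. Qed.

Lemma sum_ge2 (f : 'I_d -> R) k l : k != l -> (forall i, 0 <= f i) -> f k + f l <= \sum_i f i.
Proof.
move=> hkl h; rewrite (bigD1 k) //= lerD2l (bigD1 l) 1?eq_sym //= lerDl.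
by apply: sumr_ge0.
Qed.

Lemma quad_pos v : v != 0 -> 0 < \sum_k xc v k ^+ 2 / mu k.
Proof.
move=> nz.
have [k hk] : exists k, xc v k != 0.
  case: (boolP [exists k, xc v k != 0]) => [/existsP//|/existsPn h].
  by move/negP: nz; case; apply/eqP/xc0 => k; apply/eqP; move: (h k); rewrite negbK.
have hf : forall i, 0 <= xc v i ^+ 2 / mu i.
  move=> i; apply: divr_ge0; [exact: sqr_ge0|exact: ltW (mu_pos i)].
apply: lt_le_trans (sum_ge1 _ k hf).
by apply: divr_gt0; [rewrite exprn_even_gt0 //|exact: mu_pos].
Qed.


Lemma sAl m n p a (A : 'M[R]_(m,n)) (B : 'M[R]_(n,p)) : (a *: A) *m B = a *: (A *m B).
Proof. by rewrite scalemxAl. Qed.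
Lemma sAr m n p a (A : 'M[R]_(m,n)) (B : 'M[R]_(n,p)) : A *m (a *: B) = a *: (A *m B).
Proof. by rewrite scalemxAr. Qed.

Lemma quad_comb (A : 'M[R]_d) (a b : 'cV[R]_d) r s :
  ((r *: (a + s *: b))^T *m A *m (r *: (a + s *: b))) 0 0 =
  r ^+ 2 * ((a^T *m A *m a) 0 0 + s * (a^T *m A *m b) 0 0 + s * (b^T *m A *m a) 0 0
            + s ^+ 2 * (b^T *m A *m b) 0 0).
Proof.
rewrite !(trZ, trD) !(sAl, sAr, mulmxDl, mulmxDr).
rewrite !(addE, sclE).
move: ((a^T *m A *m a) 0 0) ((a^T *m A *m b) 0 0) ((b^T *m A *m a) 0 0) ((b^T *m A *m b) 0 0).
move=> x1 x2 x3 x4 /=; ring.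
Qed.

Lemma sgn_sq b : sgn R b ^+ 2 = 1.
Proof. by case: b; rewrite /sgn ?expr1n ?sqrrN ?expr1n. Qed.

Lemma r2 : (Num.sqrt (2 : R))^-1 ^+ 2 = 2^-1.
Proof. by rewrite exprVn sqr_sqrtr // ler0n. Qed.

Lemma wvec_norm i j b : ((wvec U i j b)^T *m wvec U i j b) 0 0 = 1.
Proof.
rewrite /wvec; case: eqP => [->|/eqP hij]; first by rewrite uTu00 eqxx.
have := quad_comb 1%:M (u i) (u j) (Num.sqrt 2)^-1 (sgn R b).
rewrite !mulmx1 => ->; rewrite r2 !uTu00 eqxx (negbTE hij) eq_sym (negbTE hij) sgn_sq.
by rewrite !mulr0 !addr0 eqxx mul1r -natrD mulVf // pnatr_eq0.
Qed.

Variable L : 'M[R]_d.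
Hypothesis hL : L^T = L.
Hypothesis hLs : spec_norm_le1 L.

Definition Lh i j := ((u i)^T *m L *m u j) 0 0.

Lemma Lh_sym i j : Lh i j = Lh j i.
Proof. by rewrite /Lh -e00_tr !trmx_mul trmxK hL mulmxA. Qed.

Lemma ell_diag i b : ell U L i i b = Lh i i.
Proof. by rewrite /ell /wvec eqxx. Qed.

Lemma ell_off i j b : i != j -> ell U L i j b = (Lh i i + Lh j j) / 2 + sgn R b * Lh i j.
Proof.
move=> hij; rewrite /ell /wvec (negbTE hij) quad_comb r2 -/(Lh i i) -/(Lh i j) -/(Lh j i) -/(Lh j j).
by rewrite sgn_sq (Lh_sym j i); field.
Qed.

Lemma ell_sq i j b : ell U L i j b ^+ 2 <= 1.
Proof.
rewrite /ell -mulmxA; apply: le_trans (cs _ _ (wvec_norm i j b)) _.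
by have := hLs (wvec U i j b); rewrite (wvec_norm i j b).
Qed.

Lemma frob_tr (A : 'M[R]_d) : frob_norm2 A = \tr (A^T *m A).
Proof.
rewrite /frob_norm2 /mxtrace exchange_big; apply: eq_bigr => j _; rewrite mxE.
by apply: eq_bigr => i _; rewrite mxE expr2.
Qed.

Lemma frobL : frob_norm2 L = \sum_i \sum_j Lh i j ^+ 2.
Proof.
have -> : \sum_i \sum_j Lh i j ^+ 2 = frob_norm2 (U^T *m L *m U).
  apply: eq_bigr => i _; apply: eq_bigr => j _.
  by rewrite /Lh /ucol tr_col -row_mul row_col_mul.
rewrite !frob_tr.
have -> : (U^T *m L *m U)^T *m (U^T *m L *m U) = U^T *m (L^T *m L) *m U.
  by rewrite !trmx_mul trmxK !mulmxA -(mulmxA (U^T *m L^T) U) UUT mulmx1.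
by rewrite [RHS]mxtrace_mulC !mulmxA UUT mul1mx.
Qed.


Lemma e11M (X Y : 'M[R]_1) : (X *m Y) 0 0 = X 0 0 * Y 0 0.
Proof. by rewrite mxE big_ord1. Qed.

Lemma quad_outer v k l : (v^T *m (u k *m (u l)^T) *m v) 0 0 = xc v k * xc v l.
Proof. by rewrite mulmxA -mulmxA e11M vTu. Qed.

Lemma tr_outer (Y : 'M[R]_d) (p q : 'cV[R]_d) : \tr (Y *m (p *m q^T)) = (q^T *m Y *m p) 0 0.
Proof. by rewrite mulmxA mxtrace_mulC trace_mx11 mulmxA. Qed.

Variable eta : R.
Hypothesis heta : 0 < eta.
Hypothesis hlam_pos : forall i, 0 < lam mu eta i.
Hypothesis hlam_mu : forall i, mu i <= 2 * lam mu eta i.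
Hypothesis hlam2 : forall i, 2 * mu i * eta <= lam mu eta i ^+ 2.

Lemma M_posdef (B : 'M[R]_d) : B^T = B ->
  (forall v, - (2^-1 * \sum_k xc v k ^+ 2 / mu k) <= eta * (v^T *m B *m v) 0 0) ->
  posdef (invmx W + eta *: B).
Proof.
move=> hB hq; split; first by rewrite trD trZ Winv_sym hB.
move=> v nz; rewrite mulmxDr mulmxDl addE -scalemxAr -scalemxAl sclE quadWinv.
have := quad_pos v nz; have := hq v; lra.
Qed.

Lemma inv_facts (M : 'M[R]_d) : posdef M -> (invmx M)^T = invmx M /\ invmx M *m M = 1%:M.
Proof. move=> hM; by rewrite trmx_inv hM.1 mulVmx //; exact: posdef_unit. Qed.

Lemma frob_sym (A B : 'M[R]_d) : A^T = A -> frob_inner A B = \tr (A *m B).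
Proof. by move=> h; rewrite /frob_inner h. Qed.


Lemma uWu2 k l : ((u k)^T *m W *m u l) 0 0 = mu l * (k == l)%:R.
Proof. by rewrite -mulmxA Wu sAr sclE uTu00. Qed.

Lemma uWu i : ((u i)^T *m W *m u i) 0 0 = mu i.
Proof. by rewrite -mulmxA Wu sAr sclE uTu00 eqxx mulr1. Qed.

Lemma case_diag i b :
  posdef (invmx W + eta *: Ltil U mu eta L i i b) /\
  lam mu eta i ^+ 2 * frob_inner (W - invmx (invmx W + eta *: Ltil U mu eta L i i b)) (Ltil U mu eta L i i b)
    <= 8 * eta * Lh i i ^+ 2.
Proof.
set e := ell U L i i b.
set a := e / lam mu eta i ^+ 2.
have hLt : Ltil U mu eta L i i b = a *: (u i *m (u i)^T) by rewrite /Ltil eqxx.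
have he2 : e ^+ 2 <= 1 := ell_sq i i b.
have hm := mu_pos i.
have [t1 t2] := sd1 heta hm (hlam_pos i) (hlam2 i) he2.
rewrite -/a in t1 t2.
have hPD : posdef (invmx W + eta *: Ltil U mu eta L i i b).
  apply: M_posdef; first by rewrite hLt trZ trmx_mul trmxK.
  move=> v; rewrite hLt sAr sAl sclE quad_outer.
  have hs := sum_ge1 (fun k => xc v k ^+ 2 / mu k) i (fun k => divr_ge0 (sqr_ge0 _) (ltW (mu_pos k))).
  have -> : eta * (a * (xc v i * xc v i)) = (mu i * eta * a) * (xc v i ^+ 2 / mu i).
    by field; rewrite gt_eqF.
  have hq : 0 <= xc v i ^+ 2 / mu i by rewrite divr_ge0 ?sqr_ge0 // ltW.
  move: hs hq t1; rewrite /=; move: (xc v i ^+ 2 / mu i) (mu i * eta * a) (\sum_k xc v k ^+ 2 / mu k) => q t S.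
  move=> h1 h2 h3.
  have : 0 <= (t + 2^-1) * q by rewrite mulr_ge0 //; lra.
  lra.
split => //.
have [hXs hXM] := inv_facts _ hPD.
set M := invmx W + eta *: Ltil U mu eta L i i b in hPD hXs hXM *.
set X := invmx M in hXs hXM *.
set k := (mu i)^-1 + eta * a.
have hk : 0 < k.
  have -> : k = (1 + mu i * eta * a) / mu i by rewrite /k; field; rewrite gt_eqF.
  by rewrite divr_gt0 //; lra.
have hMu : M *m u i = k *: u i.
  rewrite /M mulmxDl Winv_u hLt !sAl -mulmxA uTu eqxx mul_mx_scalar scale1r scalerA.
  by rewrite -scalerDl.
have hXu : X *m u i = k^-1 *: u i.
  have h : u i = k *: (X *m u i) by rewrite -sAr -hMu mulmxA hXM mul1mx.
  by rewrite {2}h scalerA mulVf ?scale1r // gt_eqF.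
have hsym : (W - X)^T = W - X by rewrite trD trN hWpd.1 hXs.
rewrite frob_sym // hLt sAr mxtraceZ tr_outer mulmxBr mulmxBl addE oppE uWu.
rewrite -mulmxA hXu sAr sclE uTu00 eqxx mulr1.
rewrite -(ell_diag i b) -/e.
exact: sd2 heta hm (hlam_pos i) (hlam_mu i) (hlam2 i) he2.
Qed.

Lemma Su_i i j : i != j -> (u i *m (u j)^T + u j *m (u i)^T) *m u i = u j.
Proof.
move=> hij; have hji : j != i by rewrite eq_sym.
by rewrite mulmxDl -!mulmxA !uTu eqxx (negbTE hji) !mul_mx_scalar scale0r add0r scale1r.
Qed.

Lemma Su_j i j : i != j -> (u i *m (u j)^T + u j *m (u i)^T) *m u j = u i.
Proof. by move=> hij; rewrite addrC Su_i // eq_sym. Qed.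

Lemma case_off i j b : i != j ->
  posdef (invmx W + eta *: Ltil U mu eta L i j b) /\
  lam mu eta i * lam mu eta j * frob_inner (W - invmx (invmx W + eta *: Ltil U mu eta L i j b)) (Ltil U mu eta L i j b)
    <= 32 / 15 * eta * ell U L i j b ^+ 2.
Proof.
move=> hij.
set e := ell U L i j b.
set c := sgn R b * e / (2 * lam mu eta i * lam mu eta j).
set S := u i *m (u j)^T + u j *m (u i)^T.
have hLt : Ltil U mu eta L i j b = c *: S by rewrite /Ltil (negbTE hij).
have he2 : e ^+ 2 <= 1 := ell_sq i j b.
have hm1 := mu_pos i; have hm2 := mu_pos j.
have hz := so1 heta hm1 hm2 (hlam_pos i) (hlam_pos j) (hlam2 i) (hlam2 j) he2 (sgn_sq b).
rewrite -/c in hz.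
have hPD : posdef (invmx W + eta *: Ltil U mu eta L i j b).
  apply: M_posdef; first by rewrite hLt trZ trD !trmx_mul !trmxK addrC.
  move=> v; rewrite hLt sAr sAl sclE mulmxDr mulmxDl addE !quad_outer mulrA.
  have hs := sum_ge2 (fun k => xc v k ^+ 2 / mu k) _ _ hij (fun k => divr_ge0 (sqr_ge0 _) (ltW (mu_pos k))).
  have := so2 (x := xc v i) (y := xc v j) hm1 hm2 hz.
  rewrite /= in hs; lra.
split => //.
have [hXs hXM] := inv_facts _ hPD.
set M := invmx W + eta *: Ltil U mu eta L i j b in hPD hXs hXM *.
set X := invmx M in hXs hXM *.
have hMi : M *m u i = (mu i)^-1 *: u i + (eta * c) *: u j.
  by rewrite /M mulmxDl Winv_u hLt !sAl Su_i // scalerA.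
have hMj : M *m u j = (mu j)^-1 *: u j + (eta * c) *: u i.
  by rewrite /M mulmxDl Winv_u hLt !sAl Su_j // scalerA.
have e1 : u i = (mu i)^-1 *: (X *m u i) + (eta * c) *: (X *m u j).
  by rewrite -!sAr -mulmxDr -hMi mulmxA hXM mul1mx.
have e2 : u j = (mu j)^-1 *: (X *m u j) + (eta * c) *: (X *m u i).
  by rewrite -!sAr -mulmxDr -hMj mulmxA hXM mul1mx.
have q := fun k l => uTu00 k l.
have f1 := congr1 (fun w => ((u i)^T *m w) 0 0) e1.
have f2 := congr1 (fun w => ((u j)^T *m w) 0 0) e1.
have f3 := congr1 (fun w => ((u i)^T *m w) 0 0) e2.
have f4 := congr1 (fun w => ((u j)^T *m w) 0 0) e2.
rewrite /= !mulmxDr !sAr !addE !sclE !uTu00 !eqxx (negbTE hij) eq_sym (negbTE hij) in f1 f2 f3 f4.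
rewrite !mulmxA in f1 f2 f3 f4.
have hK : 1 - (eta * c) ^+ 2 * mu i * mu j != 0 by rewrite gt_eqF //; lra.
rewrite !(mulrC (mu _)^-1) in f1 f2 f3 f4.
have hab := so4 hm1 hm2 hK f1 f2 f3 f4.
have hsym : (W - X)^T = W - X by rewrite trD trN hWpd.1 hXs.
rewrite frob_sym // hLt sAr mxtraceZ /S mulmxDr mxtraceD !tr_outer !mulmxBr !mulmxBl !addE !oppE !uWu2.
rewrite (negbTE hij) eq_sym (negbTE hij) !mulr0 !add0r -opprD hab mulNr opprK.
exact: so3 heta hm1 hm2 (hlam_pos i) (hlam_pos j) (hlam_mu i) (hlam_mu j) (hlam2 i) (hlam2 j) he2 (sgn_sq b) erefl.
Qed.

Definition fr i j b := frob_inner (W - invmx (invmx W + eta *: Ltil U mu eta L i j b)) (Ltil U mu eta L i j b).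

Lemma term_bound i j :
  lam mu eta i * lam mu eta j * (if i == j then fr i j true else (fr i j true + fr i j false) / 2)
  <= eta * (2 * (Lh i i ^+ 2 + Lh j j ^+ 2) + 8 * Lh i j ^+ 2).
Proof.
case: (eqVneq i j) => [<-|hij].
  rewrite -expr2; have [_ h] := case_diag i true.
  apply: le_trans h _; have := mulr_ge0 (ltW heta) (sqr_ge0 (Lh i i)); lra.
have [_ h1] := case_off _ _ true hij.
have [_ h2] := case_off _ _ false hij.
rewrite !ell_off // /sgn in h1 h2.
move: h1 h2; rewrite -/(fr i j true) -/(fr i j false).
move: (fr i j true) (fr i j false) (Lh i i) (Lh j j) (Lh i j) => x y A B H h1 h2.
have -> : lam mu eta i * lam mu eta j * ((x + y) / 2) = (lam mu eta i * lam mu eta j * x + lam mu eta i * lam mu eta j * y) / 2 by ring.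
move: h1 h2; move: (lam mu eta i * lam mu eta j * x) (lam mu eta i * lam mu eta j * y) => X Y h1 h2.
have k1 := mulr_ge0 (ltW heta) (sqr_ge0 (A - B)).
have k2 := mulr_ge0 (ltW heta) (sqr_ge0 (A + B)).
have k3 := mulr_ge0 (ltW heta) (sqr_ge0 H).
lra.
Qed.

Lemma sum_bound : (2 <= d)%N ->
  Et mu eta fr <= 8 * eta * d%:R * \sum_i \sum_j Lh i j ^+ 2.
Proof.
move=> hd.
apply: le_trans (ler_sum _ (fun i _ => ler_sum _ (fun j _ => term_bound i j))) _.
set T := \sum_i \sum_j Lh i j ^+ 2.
set D := \sum_i Lh i i ^+ 2.
have hDT : D <= T.
  apply: ler_sum => i _; exact: (sum_ge1 (fun j => Lh i j ^+ 2) i (fun j => sqr_ge0 _)).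
have -> : \sum_i \sum_j eta * (2 * (Lh i i ^+ 2 + Lh j j ^+ 2) + 8 * Lh i j ^+ 2)
   = eta * (2 * (d%:R * D) + 2 * (d%:R * D) + 8 * T).
  under eq_bigr => i _ do rewrite -mulr_sumr.
  rewrite -mulr_sumr; congr (_ * _).
  under eq_bigr => i _ do rewrite big_split /= -!mulr_sumr big_split /= sumr_const card_ord.
  rewrite big_split /= -mulr_sumr big_split /= -!mulr_sumr sumr_const card_ord.
  rewrite sumrMnl -/D -/T -mulr_natl; ring.
have hD : 0 <= D by apply: sumr_ge0 => i _; exact: sqr_ge0.
have hd2 : 2 <= d%:R :> R by rewrite (ler_nat R 2 d).
have k1 := mulr_ge0 (ltW heta) hD.
have k2 : 0 <= eta * (T - D) by apply: mulr_ge0; [exact: ltW|lra].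
have k3 : 0 <= (d%:R - 2) * (eta * T) by apply: mulr_ge0; lra.
nra.
Qed.

End Basic.

Lemma sl {R : realFieldType} {eta mu g : R} : 0 < eta -> 0 < mu -> 0 <= g -> g <= 2^-1 ->
  0 < (1 - g) * mu + eta /\ mu <= 2 * ((1 - g) * mu + eta) /\ 2 * mu * eta <= ((1 - g) * mu + eta) ^+ 2.
Proof.
move=> he hm hg0 hg1.
have h1 : 0 <= (1 - g) * mu by apply: mulr_ge0; lra.
have h2 : 0 <= (2^-1 - g) * mu by apply: mulr_ge0; lra.
split; first lra.
split; first lra.
have h3 := sqr_ge0 ((1 - g) * mu - eta).
have h4 : 0 <= (2^-1 - g) * mu * eta by apply: mulr_ge0; lra.
nra.
Qed.

Theorem lemma5 (R : rcfType) (d : nat) (eta : R) (W L U : 'M[R]_d) (mu : 'I_d -> R) :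
  (2 <= d)%N ->
  0 < eta -> eta <= (2 * d%:R)^-1 ->
  U^T *m U = 1%:M ->
  W = \sum_(i < d) mu i *: (ucol U i *m (ucol U i)^T) ->
  posdef W -> density W ->
  L^T = L -> spec_norm_le1 L ->
  (forall (i j : 'I_d) (b : bool), posdef (invmx W + eta *: Ltil U mu eta L i j b)) /\
  Et mu eta (fun i j b =>
      frob_inner (W - invmx (invmx W + eta *: Ltil U mu eta L i j b))
                 (Ltil U mu eta L i j b))
    <= 8 * eta * d%:R * frob_norm2 L.
Proof.
move=> hd heta hetab hU hW hWpd _ hL hLs.
have hd0 : 0 < d%:R :> R by rewrite ltr0n; apply: leq_trans hd.
have hg : eta * d%:R <= 2^-1.
  move: hetab; rewrite -div1r ler_pdivlMr ?mulr_gt0 // => h; lra.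
have hg0 : 0 <= eta * d%:R by rewrite mulr_ge0 // ltW.
have hlamE : forall i, lam mu eta i = (1 - eta * d%:R) * mu i + eta.
  by move=> i; rewrite /lam; field; rewrite gt_eqF.
have hmu := @mu_pos R d U hU W mu hW hWpd.
have hlam_pos : forall i, 0 < lam mu eta i.
  by move=> i; rewrite hlamE; case: (sl heta (hmu i) hg0 hg).
have hlam_mu : forall i, mu i <= 2 * lam mu eta i.
  by move=> i; rewrite hlamE; case: (sl heta (hmu i) hg0 hg) => _ [].
have hlam2 : forall i, 2 * mu i * eta <= lam mu eta i ^+ 2.
  by move=> i; rewrite hlamE; case: (sl heta (hmu i) hg0 hg) => _ [].
split.
  move=> i j b; case: (eqVneq i j) => [<-|hij].
    by case: (@case_diag R d U hU W mu hW hWpd L hLs eta heta hlam_pos hlam_mu hlam2 i b).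
  by case: (@case_off R d U hU W mu hW hWpd L hLs eta heta hlam_pos hlam_mu hlam2 i j b hij).
rewrite (@frobL R d U hU L).
exact: (@sum_bound R d U hU W mu hW hWpd L hL hLs eta heta hlam_pos hlam_mu hlam2 hd).
Qed.
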